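(* Let $\mathcal A_{0-2}$ be the finite automaton with final state output having states $a_0,a_1,a_2$, input alphabet $X_3=\{0,1,2\}$, initial state $a_1$, transitions $a_1\xrightarrow{0}a_0$, $a_1\xrightarrow{1}a_1$, $a_1\xrightarrow{2}a_2$, and $a_0\xrightarrow{x}a_0$, $a_2\xrightarrow{x}a_2$ for all $x\in X_3$, and output $1$ at $a_0$, $1$ at $a_1$, $-1$ at $a_2$. Then $w_\alpha$ is a ternary automatic sequence produced by $\mathcal A_{0-2}$: for every integer $i\ge0$ and every word $u_0u_1\dots u_m$ over $X_3$ with $i=\sum_{j=0}^m u_j3^j$, the output of the state reached from $a_1$ after reading $u_0,u_1,\dots,u_m$ in this order is the $i$-th term (indexing from $0$) of $w_\alpha$.
   Context: $w_\alpha=\lim_{n\to\infty}\phi^n(1)$, where $\phi$ is the monoid endomorphism of $\{1,-1\}^*$ determined by $\phi(1)=1\,1\,(-1)$ and $\phi(-1)=1\,(-1)\,(-1)$. Input digits are read least significant first. *)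

(* Defs.v *)
From mathcomp Require Import all_boot all_order all_algebra.
Set Implicit Arguments. Unset Strict Implicit. Unset Printing Implicit Defensive.
Import GRing.Theory Num.Theory.
Local Open Scope ring_scope.

(* Letters of {1,-1} are represented as integers 1 and -1. *)

Definition phi_letter (x : int) : seq int :=
  if x == 1 then [:: 1; 1; -1] else [:: 1; -1; -1].

Definition phi (s : seq int) : seq int := flatten (map phi_letter s).

Definition phi_iter (n : nat) : seq int := iter n phi [:: 1].

(* w is the limit of phi^n(1): every phi^n(1) is a prefix of w. *)
Definition is_limit_word (w : nat -> int) : Prop :=
  forall (n k : nat), (k < size (phi_iter n))%N -> w k = nth 0 (phi_iter n) k.

Inductive astate := a0 | a1 | a2.

Definition adelta (q : astate) (x : nat) : astate :=
  match q with
  | a1 => if x == 0%N then a0 else if x == 1%N then a1 else a2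
  | a0 => a0
  | a2 => a2
  end.

Definition aout (q : astate) : int :=
  match q with a0 => 1 | a1 => 1 | a2 => -1 end.

Definition arun (q : astate) (u : seq nat) : astate := foldl adelta q u.

Definition base3_value (u : seq nat) : nat :=
  \sum_(j < size u) nth 0%N u j * 3 ^ j.

(* Main.v *)
Require Import Defs.
From mathcomp Require Import all_boot all_order all_algebra.
From mathcomp Require Import zify.
Local Open Scope ring_scope.

Lemma size_phi (s : seq int) : size (phi s) = (3 * size s)%N.
Proof.
elim: s => [|x s IH] //=.
rewrite /phi /= size_cat -/(phi s) IH /phi_letter; case: ifP => _ /=; lia.
Qed.

Lemma size_phi_iter n : size (phi_iter n) = (3 ^ n)%N.
Proof. elim: n => [|n IH] //=; rewrite /phi_iter /= -/(phi_iter n) size_phi IH expnS //. Qed.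

Lemma nth_phi (s : seq int) k d : (k < size s)%N -> (d < 3)%N ->
  nth 0 (phi s) (3 * k + d) = nth 0 (phi_letter (nth 0 s k)) d.
Proof.
elim: s k => [|x s IH] k //= Hk Hd.
rewrite /phi /= -/(phi s) nth_cat.
have -> : size (phi_letter x) = 3%N by rewrite /phi_letter; case: ifP.
case: k Hk => [|k] Hk.
  rewrite (_ : (3 * 0 + d = d)%N); last by lia.
  by rewrite Hd.
have -> : (3 * k.+1 + d < 3)%N = false by lia.
have -> : (3 * k.+1 + d - 3 = 3 * k + d)%N by lia.
by apply: IH.
Qed.

Lemma arun_a0 u : arun a0 u = a0.
Proof. by elim: u. Qed.
Lemma arun_a2 u : arun a2 u = a2.
Proof. by elim: u. Qed.

Lemma base3_cons d u : base3_value (d :: u) = (d + 3 * base3_value u)%N.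
Proof.
rewrite /base3_value /= big_ord_recl /= expn0 muln1; congr (_ + _)%N.
rewrite big_distrr /=; apply: eq_bigr => j _.
by rewrite expnS add0n mulnCA.
Qed.

Lemma key u : all (fun d => (d < 3)%N) u -> forall n, (base3_value u < 3 ^ n)%N ->
  nth 0 (phi_iter n) (base3_value u) = aout (arun a1 u).
Proof.
elim: u => [|d u IH] /=.
  move=> _ n _; rewrite /base3_value big_ord0 /=.
  elim: n => [|n IHn] //.
  rewrite /phi_iter /= -/(phi_iter n).
  have H0 : (0 < size (phi_iter n))%N by rewrite size_phi_iter expn_gt0.
  have := @nth_phi _ 0 0 H0 (isT : (0 < 3)%N); rewrite muln0 addn0 => ->.
  by rewrite IHn.
move=> /andP [Hd Hu] n; rewrite base3_cons => Hlt.
case: n Hlt => [|n] Hlt.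
  have Hd0 : d = 0%N by rewrite expn0 in Hlt; lia.
  subst d; rewrite /= arun_a0.
  have -> : (0 + 3 * base3_value u = 0)%N by rewrite expn0 in Hlt; lia.
  done.
have Hv : (base3_value u < 3 ^ n)%N by rewrite expnS in Hlt; lia.
rewrite /phi_iter /= -/(phi_iter n) addnC nth_phi ?size_phi_iter //.
rewrite IH //.
clear Hlt; case: d Hd => [|[|[|d]]] // _ /=.
- by rewrite arun_a0 /phi_letter; case: (_ == _).
- by rewrite /phi_letter; case: (arun a1 u).
- by rewrite arun_a2 /phi_letter; case: (_ == _).
Qed.

Theorem mainTheorem5 (w : nat -> int) :
  is_limit_word w ->
  forall (i : nat) (u : seq nat),
    all (fun d => (d < 3)%N) u ->
    i = base3_value u ->
    aout (arun a1 u) = w i.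
Proof.
move=> Hw i u Hu Hi.
have Hlt : (i < 3 ^ i)%N by apply: ltn_expl.
rewrite (Hw i i) ?size_phi_iter // Hi key // -Hi //.
Qed.
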